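(* The relation $\to_{\lambda j}$ is confluent: for all $\lambda j$-terms $t,u_1,u_2$ with $t\to^*_{\lambda j}u_1$ and $t\to^*_{\lambda j}u_2$, there exists $v$ with $u_1\to^*_{\lambda j}v$ and $u_2\to^*_{\lambda j}v$.
   Context: $\lambda j$-terms are generated by $t,u::= x\mid \lambda x.t\mid t\,u\mid t[x/u]$ ($x$ ranging over variables); $\lambda x.t$ and $t[x/u]$ bind $x$ in $t$ (not in $u$), and terms are considered modulo $\alpha$-conversion. $\mathrm{fv}(t)$ is the set of free variables, $t\{x/u\}$ is capture-avoiding meta-level substitution, and $|t|_x$ is the number of free occurrences of $x$ in $t$. If $|t|_x=n\ge2$, $t_{[y]_x}$ denotes any term obtained from $t$ by replacing $k$ of the free occurrences of $x$ by a fresh variable $y$, for some $1\le k\le n-1$. ${\tt L}$ denotes a (possibly empty) list of jumps $[x_1/u_1]\dots[x_k/u_k]$. The rewriting rules, closed under all contexts, are: $({\tt dB})$ $(\lambda x.t){\tt L}\,u\to t[x/u]{\tt L}$ where no $x_i$ of ${\tt L}$ is free in $u$; $({\tt w})$ $t[x/u]\to t$ if $|t|_x=0$; $({\tt d})$ $t[x/u]\to t\{x/u\}$ if $|t|_x=1$; $({\tt c})$ $t[x/u]\to t_{[y]_x}[x/u][y/u]$ if $|t|_x\ge2$, $y$ fresh. $\to_{\lambda j}$ is the union of all four. *)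

(* Defs.v *)
From Stdlib Require Import Arith List Relations.
Import ListNotations.

(* Var n : de Bruijn index n;  Lam t = \x.t (binds index 0 in t);
   App t u = t u;  Jmp t u = t[x/u] (binds index 0 in t, not in u). *)
Inductive term : Type :=
| Var : nat -> term
| Lam : term -> term
| App : term -> term -> term
| Jmp : term -> term -> term.

Fixpoint lift (k c : nat) (t : term) : term :=
  match t with
  | Var n => if n <? c then Var n else Var (n + k)
  | Lam a => Lam (lift k (S c) a)
  | App a b => App (lift k c a) (lift k c b)
  | Jmp a b => Jmp (lift k (S c) a) (lift k c b)
  end.

(* subst c u t : capture-avoiding meta-level substitution t{c/u}, removing
   the binder of index c (indices > c are decremented). *)
Fixpoint subst (c : nat) (u t : term) : term :=
  match t with
  | Var n => if n <? c then Var n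
             else if n =? c then lift c 0 u else Var (pred n)
  | Lam a => Lam (subst (S c) u a)
  | App a b => App (subst c u a) (subst c u b)
  | Jmp a b => Jmp (subst (S c) u a) (subst c u b)
  end.

Fixpoint occ (c : nat) (t : term) : nat :=
  match t with
  | Var n => if n =? c then 1 else 0
  | Lam a => occ (S c) a
  | App a b => occ c a + occ c b
  | Jmp a b => occ (S c) a + occ c b
  end.

(* splitrel c t t' : t' is obtained from t by inserting a fresh binder y just
   outside x (x = index c, y = index c+1 in t', other free indices shifted),
   and replacing SOME (arbitrary) free occurrences of x by y. *)
Inductive splitrel : nat -> term -> term -> Prop :=
| sp_lt : forall c n, n < c -> splitrel c (Var n) (Var n)
| sp_keep : forall c, splitrel c (Var c) (Var c)
| sp_move : forall c, splitrel c (Var c) (Var (S c))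
| sp_gt : forall c n, c < n -> splitrel c (Var n) (Var (S n))
| sp_lam : forall c a a', splitrel (S c) a a' -> splitrel c (Lam a) (Lam a')
| sp_app : forall c a a' b b', splitrel c a a' -> splitrel c b b' ->
    splitrel c (App a b) (App a' b')
| sp_jmp : forall c a a' b b', splitrel (S c) a a' -> splitrel c b b' ->
    splitrel c (Jmp a b) (Jmp a' b').

(* t L where L = [u1; ...; uk] stands for t[x1/u1]...[xk/uk] *)
Definition jumps (t : term) (L : list term) : term :=
  fold_left (fun acc v => Jmp acc v) L t.

(* Root rules. In de Bruijn form the side condition of dB (no x_i of L free
   in u) is handled by lifting u over the k binders of L. *)
Inductive root : term -> term -> Prop :=
| r_dB : forall t L u,
    root (App (jumps (Lam t) L) u) (jumps (Jmp t (lift (length L) 0 u)) L)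
| r_w : forall t u, occ 0 t = 0 -> root (Jmp t u) (subst 0 u t)
| r_d : forall t u, occ 0 t = 1 -> root (Jmp t u) (subst 0 u t)
| r_c : forall t t' u, 2 <= occ 0 t -> splitrel 0 t t' ->
    1 <= occ 1 t' -> 1 <= occ 0 t' ->
    (* t_[y]_x [x/u] [y/u] : y is the outer binder (index 1 inside) *)
    root (Jmp t u) (Jmp (Jmp t' (lift 1 0 u)) u).

Inductive step : term -> term -> Prop :=
| s_root : forall t t', root t t' -> step t t'
| s_lam : forall t t', step t t' -> step (Lam t) (Lam t')
| s_appl : forall t t' u, step t t' -> step (App t u) (App t' u)
| s_appr : forall t u u', step u u' -> step (App t u) (App t u')
| s_jmpl : forall t t' u, step t t' -> step (Jmp t u) (Jmp t' u)
| s_jmpr : forall t u u', step u u' -> step (Jmp t u) (Jmp t u').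

Definition steps : term -> term -> Prop := clos_refl_trans term step.

(* Main.v *)
Require Import Defs.
From Stdlib Require Import Arith List Relations Lia.
Import ListNotations.

Ltac solve_var := repeat (cbn [lift subst occ pred] in *; match goal with
 | |- context [?a <? ?b] => destruct (Nat.ltb_spec a b)
 | |- context [?a =? ?b] => destruct (Nat.eqb_spec a b)
 | H : context [?a <? ?b] |- _ => destruct (Nat.ltb_spec a b)
 | H : context [?a =? ?b] |- _ => destruct (Nat.eqb_spec a b)
 end); try (exfalso; lia); try reflexivity; try (f_equal; lia).

Lemma lift0 : forall t c, lift 0 c t = t.
Proof. induction t; intros; simpl; try solve_var; f_equal; auto. Qed.

Lemma lift_lift1 : forall t m k i j, i <= j <= i + k ->
  lift m j (lift k i t) = lift (m + k) i t.
Proof. induction t; intros; simpl.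
- solve_var.
- f_equal; apply IHt; lia.
- f_equal; auto.
- f_equal; [apply IHt1|apply IHt2]; lia.
Qed.

Lemma lift_lift2 : forall t m k i j, i <= j ->
  lift m i (lift k j t) = lift k (j + m) (lift m i t).
Proof. induction t; intros; simpl.
- solve_var.
- f_equal; rewrite IHt by lia; f_equal.
- f_equal; auto.
- f_equal; [rewrite IHt1 by lia; f_equal|apply IHt2; lia].
Qed.

Lemma subst_lift : forall t u k j c, j <= c <= j + k ->
  subst c u (lift (S k) j t) = lift k j t.
Proof. induction t; intros; simpl.
- solve_var.
- f_equal; apply IHt; lia.
- f_equal; auto.
- f_equal; [apply IHt1|apply IHt2]; lia.
Qed.

Lemma lift_subst : forall t u k i c,
  lift k (i + c) (subst c u t) = subst c (lift k i u) (lift k (S (i + c)) t).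
Proof. induction t; intros; simpl.
- destruct (Nat.ltb_spec n c).
  + solve_var.
  + destruct (Nat.eqb_spec n c).
    * subst. solve_var. rewrite (lift_lift2 u c k 0 i) by lia. f_equal; lia.
    * solve_var.
- f_equal. replace (S (i + c)) with (i + S c) by lia. rewrite IHt. f_equal.
- f_equal; auto.
- f_equal; [|auto]. replace (S (i + c)) with (i + S c) by lia. rewrite IHt1. f_equal.
Qed.

Lemma subst_lift2 : forall v u c i j, j <= i ->
  subst (c + i) u (lift c j v) = lift c j (subst i u v).
Proof. induction v; intros; simpl.
- destruct (Nat.ltb_spec n j).
  + solve_var.
  + destruct (Nat.ltb_spec n i).
    * solve_var.
    * destruct (Nat.eqb_spec n i).
      { subst. solve_var. rewrite lift_lift1 by lia. f_equal; lia. }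
      { solve_var. }
- f_equal. replace (S (c + i)) with (c + S i) by lia. apply IHv. lia.
- f_equal; auto.
- f_equal; [|auto]. replace (S (c + i)) with (c + S i) by lia. apply IHv1. lia.
Qed.

Lemma subst_subst : forall t u v i c,
  subst (i + c) u (subst c v t) = subst c (subst i u v) (subst (S (i + c)) u t).
Proof. induction t; intros; simpl.
- destruct (Nat.ltb_spec n c).
  + solve_var.
  + destruct (Nat.eqb_spec n c).
    * subst. solve_var. replace (i + c) with (c + i) by lia. apply subst_lift2. lia.
    * destruct (Nat.eqb_spec n (S (i + c))).
      { subst. solve_var. rewrite subst_lift by lia. reflexivity. }
      { solve_var. }
- f_equal. replace (S (i + c)) with (i + S c) by lia. rewrite IHt. f_equal.
- f_equal; auto.
- f_equal; [|auto]. replace (S (i + c)) with (i + S c) by lia. rewrite IHt1. f_equal.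
Qed.

Lemma occ_lift : forall t k j c, j <= c < j + k -> occ c (lift k j t) = 0.
Proof. induction t; intros; simpl.
- solve_var.
- apply IHt; lia.
- rewrite IHt1, IHt2 by lia; auto.
- rewrite IHt1, IHt2 by lia; auto.
Qed.

Lemma occ_subst_split : forall t u c,
  occ c (subst c (lift 1 0 u) t) = occ (S c) t.
Proof. induction t; intros; simpl.
- destruct (Nat.ltb_spec n c).
  + solve_var.
  + destruct (Nat.eqb_spec n c).
    * subst. rewrite lift_lift1 by lia. rewrite occ_lift by lia. solve_var.
    * solve_var.
- auto.
- rewrite IHt1, IHt2; auto.
- rewrite IHt1, IHt2; auto.
Qed.

Lemma split_occ : forall c t t', splitrel c t t' -> occ c t' + occ (S c) t' = occ c t.
Proof. induction 1; cbn [occ]; try solve_var; lia. Qed.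

Lemma split_exists : forall t c k, k <= occ c t ->
  exists t', splitrel c t t' /\ occ (S c) t' = k.
Proof. induction t; intros c k Hk; simpl in *.
- destruct (Nat.lt_total n c) as [H|[H|H]].
  + exists (Var n). split. apply sp_lt; auto. solve_var.
  + subst n. destruct k as [|[|k]].
    * exists (Var c). split. apply sp_keep. solve_var.
    * exists (Var (S c)). split. apply sp_move. solve_var.
    * solve_var.
  + exists (Var (S n)). split. apply sp_gt; auto. solve_var.
- destruct (IHt (S c) k Hk) as [t' [H1 H2]]. exists (Lam t'). split; [constructor; auto|auto].
- destruct (IHt1 c (min k (occ c t1))) as [a [H1 H2]]. lia.
  destruct (IHt2 c (k - min k (occ c t1))) as [b [H3 H4]]. lia.
  exists (App a b). split. constructor; auto. simpl. lia.
- destruct (IHt1 (S c) (min k (occ (S c) t1))) as [a [H1 H2]]. lia.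
  destruct (IHt2 c (k - min k (occ (S c) t1))) as [b [H3 H4]]. lia.
  exists (Jmp a b). split. constructor; auto. simpl. lia.
Qed.

Lemma subst_split : forall c t t', splitrel c t t' -> forall u,
  subst c u (subst c (lift 1 0 u) t') = subst c u t.
Proof. induction 1; intros u; cbn [subst lift].
- solve_var.
- solve_var. rewrite lift_lift1 by lia. replace (c + 1) with (S c) by lia. rewrite subst_lift by lia. reflexivity.
- solve_var.
- solve_var.
- rewrite IHsplitrel; auto.
- rewrite IHsplitrel1, IHsplitrel2; auto.
- rewrite IHsplitrel1, IHsplitrel2; auto.
Qed.

Lemma split_lift : forall c b b', splitrel c b b' -> forall i k, i <= c ->
  splitrel (k + c) (lift k i b) (lift k i b').
Proof. induction 1; intros i k Hi; cbn [lift].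
- destruct (Nat.ltb_spec n i); apply sp_lt; lia.
- destruct (Nat.ltb_spec c i); [lia|]. replace (c + k) with (k + c) by lia. apply sp_keep.
- destruct (Nat.ltb_spec c i); [lia|]. destruct (Nat.ltb_spec (S c) i); [lia|].
  replace (S c + k) with (S (k + c)) by lia. replace (c + k) with (k + c) by lia. apply sp_move.
- destruct (Nat.ltb_spec n i); [lia|]. destruct (Nat.ltb_spec (S n) i); [lia|].
  replace (S n + k) with (S (n + k)) by lia. apply sp_gt. lia.
- constructor. replace (S (k + c)) with (k + S c) by lia. apply IHsplitrel. lia.
- constructor; auto.
- constructor; auto. replace (S (k + c)) with (k + S c) by lia. apply IHsplitrel1. lia.
Qed.

Lemma split_subst : forall d a a', splitrel d a a' -> forall j c b b', d = S (j + c) ->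
  splitrel c b b' -> splitrel (j + c) (subst j b a) (subst j b' a').
Proof. induction 1; intros j c' w w' Hd Hb; subst; cbn [subst].
- destruct (Nat.ltb_spec n j). apply sp_lt; lia.
  destruct (Nat.eqb_spec n j). apply split_lift; auto; lia.
  apply sp_lt; lia.
- destruct (Nat.ltb_spec (S (j + c')) j); [lia|].
  destruct (Nat.eqb_spec (S (j + c')) j); [lia|]. simpl. apply sp_keep.
- destruct (Nat.ltb_spec (S (j + c')) j); [lia|].
  destruct (Nat.eqb_spec (S (j + c')) j); [lia|].
  destruct (Nat.ltb_spec (S (S (j + c'))) j); [lia|].
  destruct (Nat.eqb_spec (S (S (j + c'))) j); [lia|]. simpl. apply sp_move.
- destruct (Nat.ltb_spec n j); [lia|]. destruct (Nat.eqb_spec n j); [lia|].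
  destruct (Nat.ltb_spec (S n) j); [lia|]. destruct (Nat.eqb_spec (S n) j); [lia|].
  simpl. replace n with (S (pred n)) at 2 by lia. apply sp_gt. lia.
- constructor. replace (S (j + c')) with (S j + c') by lia. apply IHsplitrel; auto.
- constructor; auto.
- constructor. replace (S (j + c')) with (S j + c') by lia. apply IHsplitrel1; auto.
  apply IHsplitrel2; auto.
Qed.

Fixpoint J (t : term) : term :=
  match t with
  | Var n => Var n
  | Lam a => Lam (J a)
  | App a b => App (J a) (J b)
  | Jmp a b => subst 0 (J b) (J a)
  end.

Lemma J_lift : forall t k c, J (lift k c t) = lift k c (J t).
Proof. induction t; intros; simpl.
- destruct (n <? c); reflexivity.
- rewrite IHt; auto.
- rewrite IHt1, IHt2; auto.
- rewrite IHt1, IHt2. pose proof (lift_subst (J t1) (J t2) k c 0) as H.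
  rewrite !Nat.add_0_r in H. auto.
Qed.

Lemma J_subst : forall t u c, J (subst c u t) = subst c (J u) (J t).
Proof. induction t; intros; simpl.
- destruct (n <? c); [reflexivity|]. destruct (n =? c). apply J_lift. reflexivity.
- rewrite IHt; auto.
- rewrite IHt1, IHt2; auto.
- rewrite IHt1, IHt2. pose proof (subst_subst (J t1) (J u) (J t2) c 0) as H.
  rewrite !Nat.add_0_r in H. auto.
Qed.

Lemma J_split : forall c t t', splitrel c t t' -> splitrel c (J t) (J t').
Proof. induction 1 as [| | | |c a a' H IH|c a a' b b' H1 IH1 H2 IH2|c a a' b b' H1 IH1 H2 IH2]; simpl.
- apply sp_lt; auto.
- apply sp_keep.
- apply sp_move.
- apply sp_gt; auto.
- constructor; auto.
- constructor; auto.
- apply (split_subst _ _ _ IH1 0 c); auto.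
Qed.

Inductive par : term -> term -> Prop :=
| p_var : forall n, par (Var n) (Var n)
| p_lam : forall a a', par a a' -> par (Lam a) (Lam a')
| p_app : forall a a' b b', par a a' -> par b b' -> par (App a b) (App a' b')
| p_jmp : forall a a' b b', par a a' -> par b b' -> par (Jmp a b) (Jmp a' b')
| p_beta : forall a a' b b', par a a' -> par b b' -> par (App (Lam a) b) (subst 0 b' a').

Lemma par_refl : forall t, par t t.
Proof. induction t; constructor; auto. Qed.

Lemma par_lift : forall t t', par t t' -> forall k c, par (lift k c t) (lift k c t').
Proof. induction 1; intros; simpl; try (constructor; auto; fail).
- apply par_refl.
- pose proof (lift_subst a' b' k c 0) as E. rewrite !Nat.add_0_r in E. rewrite E.
  constructor; auto.
Qed.

Lemma par_subst : forall t t', par t t' -> forall u u' c, par u u' ->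
  par (subst c u t) (subst c u' t').
Proof. induction 1; intros u u' c Hu; simpl; try (constructor; auto; fail).
- destruct (n <? c). constructor. destruct (n =? c). apply par_lift; auto. constructor.
- pose proof (subst_subst a' u' b' c 0) as E. rewrite !Nat.add_0_r in E. rewrite E.
  constructor; auto.
Qed.

Fixpoint dev (t : term) : term :=
  match t with
  | Var n => Var n
  | Lam a => Lam (dev a)
  | App (Lam x) b => subst 0 (dev b) (dev x)
  | App a b => App (dev a) (dev b)
  | Jmp a b => Jmp (dev a) (dev b)
  end.

Lemma par_tri : forall t t', par t t' -> par t' (dev t).
Proof. induction 1; simpl; try (constructor; auto; fail).
- destruct a; try (constructor; auto; fail).
  inversion H; subst. simpl in IHpar1. inversion IHpar1; subst.
  constructor; auto.
- apply par_subst; auto.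
Qed.

Definition pars := clos_refl_trans_1n term par.

Lemma strip : forall t v, pars t v -> forall u, par t u ->
  exists w, pars u w /\ par v w.
Proof. induction 1; intros u Hu.
- exists u. split. constructor. auto.
- destruct (IHclos_refl_trans_1n (dev x)) as [w [H1 H2]]. apply par_tri; auto.
  exists w. split; auto. econstructor. apply par_tri; eauto. auto.
Qed.

Lemma pars_trans : forall a b c, pars a b -> pars b c -> pars a c.
Proof. intros. apply clos_rt_rt1n. apply rt_trans with b; apply clos_rt1n_rt; auto. Qed.

Lemma pars_conf : forall t u1 u2, pars t u1 -> pars t u2 ->
  exists v, pars u1 v /\ pars u2 v.
Proof. intros t u1 u2 H. revert u2. induction H; intros u2 H2.
- exists u2. split; auto. constructor.
- destruct (strip _ _ H2 _ H) as [w [H3 H4]].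
  destruct (IHclos_refl_trans_1n w H3) as [v [H5 H6]].
  exists v. split; auto. econstructor; eauto.
Qed.

Lemma pars_step : forall a b, par a b -> pars a b.
Proof. intros. econstructor; eauto. constructor. Qed.

Lemma pars_map : forall (f : term -> term), (forall a b, par a b -> par (f a) (f b)) ->
  forall a b, pars a b -> pars (f a) (f b).
Proof. induction 2. constructor. econstructor; eauto. Qed.

Lemma pars_app : forall a a' b b', pars a a' -> pars b b' -> pars (App a b) (App a' b').
Proof. intros. apply pars_trans with (App a' b).
  apply (pars_map (fun x => App x b)); auto. intros; constructor; auto using par_refl.
  apply (pars_map (fun x => App a' x)); auto. intros; constructor; auto using par_refl.
Qed.

Lemma pars_lam : forall a a', pars a a' -> pars (Lam a) (Lam a').
Proof. intros. apply (pars_map Lam); auto. intros; constructor; auto. Qed.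

Lemma pars_subst : forall a a' b b' c, pars a a' -> pars b b' ->
  pars (subst c b a) (subst c b' a').
Proof. intros. apply pars_trans with (subst c b a').
  apply (pars_map (fun x => subst c b x)); auto. intros; apply par_subst; auto using par_refl.
  apply (pars_map (fun x => subst c x a')); auto. intros; apply par_subst; auto using par_refl.
Qed.

Lemma steps_map : forall (f : term -> term), (forall a b, step a b -> step (f a) (f b)) ->
  forall a b, steps a b -> steps (f a) (f b).
Proof. intros f Hf a b H; induction H; [apply rt_step; auto | apply rt_refl | eapply rt_trans; eauto]. Qed.

Lemma steps_lam : forall a a', steps a a' -> steps (Lam a) (Lam a').
Proof. intros. apply (steps_map Lam); auto. intros; apply s_lam; auto. Qed.

Lemma steps_app : forall a a' b b', steps a a' -> steps b b' -> steps (App a b) (App a' b').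
Proof. intros. apply rt_trans with (App a' b).
  apply (steps_map (fun x => App x b)); auto. intros; apply s_appl; auto.
  apply (steps_map (fun x => App a' x)); auto. intros; apply s_appr; auto.
Qed.

Lemma steps_jmp : forall a a' b b', steps a a' -> steps b b' -> steps (Jmp a b) (Jmp a' b').
Proof. intros. apply rt_trans with (Jmp a' b).
  apply (steps_map (fun x => Jmp x b)); auto. intros; apply s_jmpl; auto.
  apply (steps_map (fun x => Jmp a' x)); auto. intros; apply s_jmpr; auto.
Qed.

Lemma steps_jmp_subst : forall n t u, occ 0 t <= n -> steps (Jmp t u) (subst 0 u t).
Proof. induction n; intros t u Hn.
- apply rt_step. constructor. apply r_w. lia.
- destruct (Nat.le_gt_cases (occ 0 t) 1) as [Hl|Hg].
  + apply rt_step. constructor. destruct (occ 0 t) as [|[|]] eqn:E.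
    apply r_w; auto. apply r_d; auto. lia.
  + destruct (split_exists t 0 1) as [t' [Hs Ho]]. lia.
    pose proof (split_occ _ _ _ Hs) as Hsum.
    eapply rt_trans. apply rt_step. constructor. apply (r_c t t' u); auto; lia.
    eapply rt_trans. apply steps_jmp. apply IHn. lia. apply rt_refl.
    rewrite <- (subst_split _ _ _ Hs u).
    apply IHn. rewrite occ_subst_split. lia.
Qed.

Lemma par_steps : forall s s', par s s' -> steps s s'.
Proof. induction 1.
- apply rt_refl.
- apply steps_lam; auto.
- apply steps_app; auto.
- apply steps_jmp; auto.
- eapply rt_trans. apply steps_app. apply steps_lam. eauto. eauto.
  eapply rt_trans. apply rt_step. constructor. apply (r_dB a' [] b').
  simpl. rewrite lift0. eapply steps_jmp_subst. apply le_n.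
Qed.

Lemma pars_steps : forall s s', pars s s' -> steps s s'.
Proof. induction 1 as [|x y z Hxy Hyz IH]. apply rt_refl. apply rt_trans with y; auto. apply par_steps; auto. Qed.

Lemma steps_J : forall t, steps t (J t).
Proof. induction t; simpl.
- apply rt_refl.
- apply steps_lam; auto.
- apply steps_app; auto.
- eapply rt_trans. apply steps_jmp; eauto. eapply steps_jmp_subst. apply le_n.
Qed.

Lemma jumps_snoc : forall x L v, jumps x (L ++ [v]) = Jmp (jumps x L) v.
Proof. intros. unfold jumps. rewrite fold_left_app. reflexivity. Qed.

Lemma J_dB : forall L t u,
  pars (J (App (jumps (Lam t) L) u)) (J (jumps (Jmp t (lift (length L) 0 u)) L)).
Proof. induction L as [|v L IH] using rev_ind; intros t u.
- simpl. rewrite lift0. apply pars_step. constructor; apply par_refl.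
- rewrite !jumps_snoc, length_app. simpl.
  specialize (IH t (lift 1 0 u)). simpl in IH.
  rewrite lift_lift1 in IH by lia.
  replace (App (subst 0 (J v) (J (jumps (Lam t) L))) (J u)) with
    (subst 0 (J v) (App (J (jumps (Lam t) L)) (J (lift 1 0 u)))).
  apply pars_subst; auto. constructor.
  simpl. rewrite J_lift. rewrite (subst_lift _ _ 0 0 0) by lia. rewrite lift0. reflexivity.
Qed.

Lemma step_J : forall t t', step t t' -> pars (J t) (J t').
Proof. induction 1.
- destruct H.
  + apply J_dB.
  + simpl. rewrite J_subst. constructor.
  + simpl. rewrite J_subst. constructor.
  + simpl. rewrite J_lift. match goal with Hs : splitrel _ _ _ |- _ => rewrite (subst_split _ _ _ (J_split _ _ _ Hs)) end. constructor.
- simpl. apply pars_lam; auto.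
- simpl. apply pars_app; auto. constructor.
- simpl. apply pars_app; auto. constructor.
- simpl. apply pars_subst; auto. constructor.
- simpl. apply pars_subst; auto. constructor.
Qed.

Lemma steps_J_pars : forall t t', steps t t' -> pars (J t) (J t').
Proof. induction 1. apply step_J; auto. constructor. eapply pars_trans; eauto. Qed.

Theorem theorem15 : forall t u1 u2 : term,
  steps t u1 -> steps t u2 -> exists v, steps u1 v /\ steps u2 v.
Proof.
  intros t u1 u2 H1 H2.
  destruct (pars_conf _ _ _ (steps_J_pars _ _ H1) (steps_J_pars _ _ H2)) as [w [A B]].
  exists w. split.
  - apply rt_trans with (J u1). apply steps_J. apply pars_steps; auto.
  - apply rt_trans with (J u2). apply steps_J. apply pars_steps; auto.
Qed.
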